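(* Let $(X,d)$ be a compact metric space and let $f_{1,\infty}=\{f_n\}_{n=1}^\infty$ be a sequence of continuous maps $f_n:X\to X$ which is $k$-periodic for some $k\in\mathbb{N}$, i.e. $f_{j+kl}=f_j$ for all $l\in\mathbb{N}$ and all $1\le j\le k$. Then the non-autonomous system $(X,f_{1,\infty})$ is strongly multi-sensitive if and only if the autonomous system $(X, f_k\circ\cdots\circ f_1)$ is strongly multi-sensitive. Likewise, $(X,f_{1,\infty})$ is $\mathcal{N}$-sensitive if and only if $(X, f_k\circ\cdots\circ f_1)$ is $\mathcal{N}$-sensitive.
   Context: For a sequence $f_{1,\infty}=\{f_n\}$ of continuous self-maps of a compact metric space $(X,d)$, write $f_i^n=f_{n+i-1}\circ\cdots\circ f_i$ and $f_i^0=\mathrm{id}$; an autonomous system $(X,f)$ is the case $f_n=f$ for all $n$. For $k\in\mathbb{N}$ the $k$-th iterate is $f_{1,\infty}^{[k]}=\{f^k_{k(n-1)+1}\}_{n=1}^\infty$ (so its $n$-fold composition starting at index $1$ is $f_1^{kn}$). For $V\subseteq X$ and $\delta>0$, $N_{f_{1,\infty}}(V,\delta)=\{n\in\mathbb{N}: \exists u,v\in V,\ d(f_1^n(u),f_1^n(v))>\delta\}$. For $\mathbf{v}=(v_1,\dots,v_r)\in\mathbb{N}^r$, $(X,f_{1,\infty})$ is multi-sensitive with respect to $\mathbf{v}$ if there is $\delta>0$ such that for all nonempty open $U_1,\dots,U_r\subseteq X$, $\bigcap_{i=1}^r N_{f_{1,\infty}^{[v_i]}}(U_i,\delta)\neq\varnothing$.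 The system is $\mathcal{N}$-sensitive if it is multi-sensitive with respect to $(1,2,\dots,n)$ for every $n\in\mathbb{N}$, and strongly multi-sensitive if it is multi-sensitive with respect to every vector in $\mathbb{N}^r$, for every $r\in\mathbb{N}$. *)

(* Defs.v *)
From HB Require Import structures.
From mathcomp Require Import all_boot all_order all_algebra.
From mathcomp Require Import all_classical all_reals all_analysis.
Set Implicit Arguments. Unset Strict Implicit. Unset Printing Implicit Defensive.
Import Order.TTheory GRing.Theory Num.Theory.
Local Open Scope classical_set_scope.
Local Open Scope ring_scope.

(* Sequences f_{1,oo} = {f_n}_{n>=1} are represented by f : nat -> X -> X;
   the value f 0 is never used. *)

Fixpoint ncomp {X : Type} (f : nat -> X -> X) (i n : nat) : X -> X :=
  match n with
  | 0 => id
  | n'.+1 => f (i + n')%N \o ncomp f i n'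
  end.

Definition iter_seq {X : Type} (f : nat -> X -> X) (k : nat) : nat -> X -> X :=
  fun n => ncomp f (k * (n.-1) + 1)%N k.

Definition Nset {R : realType} {X : metricType R} (f : nat -> X -> X)
    (V : set X) (delta : R) : set nat :=
  [set n | (1 <= n)%N /\ exists u v, V u /\ V v /\
           delta < mdist (ncomp f 1 n u) (ncomp f 1 n v)].

Definition multi_sensitive {R : realType} {X : metricType R}
    (f : nat -> X -> X) (r : nat) (v : 'I_r -> nat) : Prop :=
  exists delta : R, 0 < delta /\
    forall U : 'I_r -> set X,
      (forall i, open (U i) /\ U i !=set0) ->
      exists n : nat, forall i, Nset (iter_seq f (v i)) (U i) delta n.

Definition N_sensitive {R : realType} {X : metricType R}
    (f : nat -> X -> X) : Prop :=
  forall n : nat, (1 <= n)%N ->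
    multi_sensitive f (fun i : 'I_n => (nat_of_ord i).+1).

Definition strongly_multi_sensitive {R : realType} {X : metricType R}
    (f : nat -> X -> X) : Prop :=
  forall (r : nat) (v : 'I_r -> nat), (1 <= r)%N ->
    (forall i, (1 <= v i)%N) -> multi_sensitive f v.

Definition autonomous {X : Type} (g : X -> X) : nat -> X -> X := fun _ => g.

(* Main.v *)
Require Import Defs.
From HB Require Import structures.
From mathcomp Require Import all_boot all_order all_algebra.
From mathcomp Require Import all_classical all_reals all_analysis.
Import Order.TTheory GRing.Theory Num.Theory.
Local Open Scope classical_set_scope.
Local Open Scope ring_scope.
Local Close Scope ring_scope.

Lemma ncomp_add {X : Type} (h : nat -> X -> X) i a b x :
  ncomp h i (a + b) x = ncomp h (i + a) b (ncomp h i a x).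
Proof.
elim: b => [|b IH]; first by rewrite addn0.
by rewrite addnS /= IH addnA.
Qed.

Lemma ncomp_iter_seq {X : Type} (h : nat -> X -> X) v n x :
  ncomp (iter_seq h v) 1 n x = ncomp h 1 (v * n) x.
Proof.
elim: n => [|n IH]; first by rewrite muln0.
rewrite /= IH mulnS (addnC v) ncomp_add /iter_seq addn1 /=.
by rewrite add0n add1n.
Qed.

Lemma ncomp_auto {X : Type} (g : X -> X) i n x :
  ncomp (autonomous g) i n x = iter n g x.
Proof. by elim: n => [|n IH] //=; rewrite IH. Qed.

Lemma Nset_ext {R : realType} {X : metricType R} (h1 h2 : nat -> X -> X)
  U (d : R) n m : (1 <= m)%N ->
  (forall x, ncomp h1 1 n x = ncomp h2 1 m x) -> Nset h1 U d n -> Nset h2 U d m.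
Proof.
move=> m1 E [n1 [u [v [Uu [Uv H]]]]]; split => //; exists u, v.
by rewrite -!E.
Qed.

Section P.
Variables (X : Type) (f : nat -> X -> X) (k : nat).
Hypothesis hper : forall l j, (1 <= l)%N -> (1 <= j <= k)%N -> f (j + k * l)%N = f j.

Lemma ncomp_shift m j x : (j <= k)%N ->
  ncomp f (1 + k * m) j x = ncomp f 1 j x.
Proof.
case: m => [|m]; first by rewrite muln0 addn0.
elim: j => [|j IH] Hj //=.
rewrite IH ?(ltnW Hj) //.
have -> : (1 + k * m.+1 + j = (1 + j) + k * m.+1)%N by rewrite addnAC.
by rewrite hper // add1n; apply/andP.
Qed.

Lemma ncomp_mul m x : ncomp f 1 (k * m) x = iter m (ncomp f 1 k) x.
Proof.
elim: m => [|m IH]; first by rewrite muln0.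
by rewrite mulnS addnC ncomp_add ncomp_shift //= IH.
Qed.
End P.
Local Open Scope ring_scope.

Theorem mainTheorem1 (R : realType) (X : metricType R)
  (hX : compact [set: X]) (f : nat -> X -> X)
  (hcont : forall n, (1 <= n)%N -> continuous (f n))
  (k : nat) (hk : (1 <= k)%N)
  (hper : forall l j, (1 <= l)%N -> (1 <= j <= k)%N -> f (j + k * l)%N = f j) :
  (strongly_multi_sensitive f <->
     strongly_multi_sensitive (autonomous (ncomp f 1%N k))) /\
  (N_sensitive f <-> N_sensitive (autonomous (ncomp f 1%N k))).
Proof.
have KA : forall v n x, ncomp (iter_seq (autonomous (ncomp f 1%N k)) v) 1 n x
    = ncomp f 1 (k * (v * n)) x.
  by move=> v n x; rewrite ncomp_iter_seq ncomp_auto ncomp_mul.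
have BACK : forall r (v : 'I_r -> nat),
    multi_sensitive (autonomous (ncomp f 1%N k)) v -> multi_sensitive f v.
  move=> r v [d [d0 H]]; exists d; split => // U HU.
  have [n Hn] := H U HU; exists (k * n)%N => i.
  have := Hn i; case=> n1 _.
  apply: (Nset_ext _ _ _ _ n (k * n) _ _ (Hn i)).
    by rewrite muln_gt0 hk.
  by move=> x; rewrite KA ncomp_iter_seq mulnCA.
split; split.
- move=> Hf r v hr hv.
  have [|d [d0 H]] := Hf r (fun i => k * v i)%N hr.
    by move=> i; rewrite muln_gt0 hk hv.
  exists d; split => // U HU.
  have [n Hn] := H U HU; exists n => i.
  have := Hn i; case=> n1 _.
  apply: (Nset_ext (iter_seq f (k * v i)) _ _ _ n n n1 _ (Hn i)).
  by move=> x; rewrite KA ncomp_iter_seq mulnA.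
- by move=> Hg r v hr hv; apply: BACK; apply: Hg.
- move=> Hf n; case: n => [//|n] _.
  have [|d [d0 H]] := Hf (n.+1 * k)%N; first by rewrite muln_gt0 hk.
  exists d; split => // U HU.
  pose U' := fun j : 'I_(n.+1 * k) => U (inord ((j.+1 %/ k).-1)).
  have [|m Hm] := H U'; first by move=> j; exact: HU.
  exists m => i.
  have ji : ((i.+1 * k).-1 < n.+1 * k)%N.
    by rewrite prednK ?muln_gt0 ?hk // leq_mul2r ltn_ord orbT.
  have := Hm (Ordinal ji); rewrite /U' /=.
  have E : ((((i.+1 * k).-1).+1 %/ k).-1 = i)%N.
    by rewrite prednK ?muln_gt0 ?hk // mulnK.
  rewrite E inord_val prednK ?muln_gt0 ?hk // => Hi.
  have m1 : (0 < m)%N by case: Hi.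
  apply: (Nset_ext _ _ _ _ m m m1 _ Hi).
  by move=> x; rewrite KA ncomp_iter_seq mulnA (mulnC k).
- by move=> Hg n hn; apply: BACK; apply: Hg.
Qed.
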